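(* Let $(\mathfrak{h},[\;,\;],\langle\;,\;\rangle_{\mathfrak{h}})$ be a Lorentzian nilpotent Lie algebra whose center $\mathrm{Z}(\mathfrak{h})$ is nondegenerate and positive definite, with $\mathfrak{g}$, $[\;,\;]_{\mathfrak{g}}$, $\langle\;,\;\rangle_{\mathfrak{g}}$, $\langle\;,\;\rangle_z$, $\omega$, $\omega_u$, $\omega_u^*$, $S_x$, $J_u$ as in the context. Then the Ricci curvature $\mathrm{ric}_{\mathfrak{h}}$ of $\mathfrak{h}$ satisfies $\mathrm{ric}_{\mathfrak{h}}(u,v)=\mathrm{ric}_{\mathfrak{g}}(u,v)-\tfrac12\mathrm{tr}(\omega_u^*\circ\omega_v)$ for $u,v\in\mathfrak{g}$, $\mathrm{ric}_{\mathfrak{h}}(x,y)=-\tfrac14\mathrm{tr}(S_x\circ S_y)$ for $x,y\in\mathrm{Z}(\mathfrak{h})$, $\mathrm{ric}_{\mathfrak{h}}(u,x)=-\tfrac14\mathrm{tr}(J_u\circ S_x)$ for $x\in\mathrm{Z}(\mathfrak{h})$, $u\in\mathfrak{g}$, where $\mathrm{ric}_{\mathfrak{g}}$ is the Ricci curvature of $(\mathfrak{g},[\;,\;]_{\mathfrak{g}},\langle\;,\;\rangle_{\mathfrak{g}})$.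
   Context: Setting: $\mathfrak{h}$ is a real finite-dimensional nilpotent Lie algebra with a Lorentzian inner product $\langle\;,\;\rangle_{\mathfrak{h}}$ (signature $(1,n-1)$) whose center $\mathrm{Z}(\mathfrak{h})$ is nondegenerate with positive definite restricted inner product $\langle\;,\;\rangle_z$. Put $\mathfrak{g}=\mathrm{Z}(\mathfrak{h})^\perp$ with restricted inner product $\langle\;,\;\rangle_{\mathfrak{g}}$. For $u,v\in\mathfrak{g}$ write $[u,v]=[u,v]_{\mathfrak{g}}+\omega(u,v)$ with $[u,v]_{\mathfrak{g}}\in\mathfrak{g}$, $\omega(u,v)\in\mathrm{Z}(\mathfrak{h})$; $(\mathfrak{g},[\;,\;]_{\mathfrak{g}})$ is a Lie algebra. For $u\in\mathfrak{g}$: $\omega_u:\mathfrak{g}\to\mathrm{Z}(\mathfrak{h})$, $v\mapsto\omega(u,v)$; $\omega_u^*:\mathrm{Z}(\mathfrak{h})\to\mathfrak{g}$ given by $\langle\omega_u^*(x),v\rangle_{\mathfrak{g}}=\langle\omega(u,v),x\rangle_z$; $\mathrm{ad}_u(v)=[u,v]_{\mathfrak{g}}$ with adjoint $\mathrm{ad}_u^*$ w.r.t. $\langle\;,\;\rangle_{\mathfrak{g}}$; $J_u:\mathfrak{g}\to\mathfrak{g}$, $J_u(v)=\mathrm{ad}_v^*(u)$. For $x\in\mathrm{Z}(\mathfrak{h})$, $S_x:\mathfrak{g}\to\mathfrak{g}$, $S_x(u)=\omega_u^*(x)$. Ricci curvature of a pseudo-Euclidean Lie algebra: Levi-Civita product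 $2\langle \mathrm{L}_uv,w\rangle=\langle[u,v],w\rangle+\langle[w,u],v\rangle+\langle[w,v],u\rangle$, curvature $K(u,v)=\mathrm{L}_{[u,v]}-[\mathrm{L}_u,\mathrm{L}_v]$, $\mathrm{ric}(u,v)=\mathrm{tr}(w\mapsto K(u,w)v)$. *)

(* Defs.v *)
From HB Require Import structures.
From mathcomp Require Import all_boot all_order all_algebra.
From mathcomp Require Export reals.
From Stdlib Require Export ClassicalEpsilon.
Set Implicit Arguments. Unset Strict Implicit. Unset Printing Implicit Defensive.
Import Order.TTheory GRing.Theory Num.Theory.
Local Open Scope ring_scope.

Section PseudoEuclideanLie.
Variables (R : realType) (V : vectType R).

Definition is_lie_bracket (br : V -> V -> V) : Prop :=
  [/\ (forall a u v w, br (a *: u + v) w = a *: br u w + br v w),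
      (forall a u v w, br w (a *: u + v) = a *: br w u + br w v),
      (forall u, br u u = 0) &
      (forall u v w, br u (br v w) + br v (br w u) + br w (br u v) = 0)].

Definition is_sym_bilinear (B : V -> V -> R) : Prop :=
  (forall a u v w, B (a *: u + v) w = a * B u w + B v w) /\
  (forall u v, B u v = B v u).

Definition lorentzian (B : V -> V -> R) : Prop :=
  exists e : seq V, basis_of fullv e /\
    forall i j, (i < size e)%N -> (j < size e)%N ->
      B e`_i e`_j = if i == j then (if i == 0%N then -1 else 1) else 0.

(* nilpotent: the lower central series vanishes, i.e. for some k all
   iterated brackets [x_1,[x_2,...,[x_k,x_0]...]] vanish *)
Definition nilpotent (br : V -> V -> V) : Prop :=
  exists k : nat, forall (x0 : V) (xs : seq V), size xs = k -> foldr br x0 xs = 0.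

Definition trace_on (U : {vspace V}) (f : V -> V) : R :=
  \sum_(i < \dim U) coord (vbasis U) i (f (tnth (vbasis U) i)).

Definition LC (U : {vspace V}) (b : V -> V -> V) (B : V -> V -> R) (u v : V) : V :=
  epsilon (inhabits 0) (fun l => l \in U /\
    forall w, w \in U -> 2 * B l w = B (b u v) w + B (b w u) v + B (b w v) u).

Definition curv (U : {vspace V}) (b : V -> V -> V) (B : V -> V -> R) (u v w : V) : V :=
  LC U b B (b u v) w - (LC U b B u (LC U b B v w) - LC U b B v (LC U b B u w)).

Definition ricci (U : {vspace V}) (b : V -> V -> V) (B : V -> V -> R) (u v : V) : R :=
  trace_on U (fun w => curv U b B u w v).

Definition adjB (U : {vspace V}) (B : V -> V -> R) (f : V -> V) (y : V) : V :=
  epsilon (inhabits 0) (fun a => a \in U /\ forall v, v \in U -> B a v = B (f v) y).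

Variables (br : V -> V -> V) (B : V -> V -> R) (g Z : {vspace V}).

Definition brg (u v : V) : V := daddv_pi g Z (br u v).
Definition omega (u v : V) : V := daddv_pi Z g (br u v).
Definition omega_star (u x : V) : V := adjB g B (omega u) x.
Definition S_op (x u : V) : V := omega_star u x.
Definition J_op (u v : V) : V := adjB g B (brg v) u.

End PseudoEuclideanLie.

(* Main.v *)
Require Import Defs.
From mathcomp Require Import all_boot all_order all_algebra.
From mathcomp Require Import complex ring lra.
From Stdlib Require Import ClassicalEpsilon.
Import Order.TTheory GRing.Theory Num.Theory.
Local Open Scope ring_scope.
Set Implicit Arguments. Unset Strict Implicit.

Lemma mx_nilp_tr (R : rcfType) n (A : 'M[R]_n) k : A ^+ k = 0 -> \tr A = 0.
Proof.
case: n A => [|n] A Ak.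
  by rewrite /mxtrace big_ord0.
pose f := real_complex R.
pose A' := map_mx f A.
have mX j : map_mx f (A ^+ j) = A' ^+ j.
  elim: j => [|j IH]; first by rewrite !expr0 map_mx1.
  by rewrite !exprS -!mulmxE map_mxM IH.
have A'k : A' ^+ k = 0 by rewrite -mX Ak map_mx0.
have minp : mxminpoly A' %| 'X^k.
  by apply: mxminpoly_min; rewrite rmorphXn /= horner_mx_X A'k.
have root0 : forall z, root (char_poly A') z -> z = 0.
  move=> z; rewrite -root_mxminpoly => /(root_dvdp minp).
  by rewrite /root hornerXn expf_eq0 => /andP[_ /eqP].
have [r Hr] := closed_field_poly_normal (char_poly A').
have Hr0 : forall z, z \in r -> z = 0.
  move=> z zr; apply: root0; rewrite Hr (monicP (char_poly_monic A')) scale1r.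
  by rewrite root_prod_XsubC.
have cpX : char_poly A' = 'X^(size r).
  rewrite Hr (monicP (char_poly_monic A')) scale1r.
  rewrite (eq_big_seq (fun _ => 'X)); last by move=> z /Hr0 ->; rewrite subr0.
  by rewrite big_const_seq count_predT; elim: (size r) => [|m IH] /=; rewrite ?expr0 // exprS IH.
have sr : size r = n.+1.
  have := size_char_poly A'; rewrite cpX size_polyXn; by case.
have : \tr A' = 0.
  apply/eqP; rewrite -oppr_eq0 -char_poly_trace // cpX coefXn sr /=.
  by rewrite eqn_leq ltnn andbF.
rewrite trace_map_mx => /eqP; rewrite -(rmorph0 f) => /eqP; apply: complexI.
Qed.

Section Gen.
Variables (R : realType) (V : vectType R) (B : V -> V -> R).
Hypothesis HB : is_sym_bilinear B.

Lemma dbl0 (x : R) : x = x + x -> x = 0.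
Proof. by move=> E; apply: (@addrI _ x); rewrite addr0 -E. Qed.

Definition lin_on (U : {vspace V}) (phi : V -> R) :=
  forall a x y, x \in U -> y \in U -> phi (a *: x + y) = a * phi x + phi y.

Lemma lin_on0 U phi : lin_on U phi -> phi 0 = 0.
Proof.
move=> H; have := H 1 0 0 (mem0v U) (mem0v U).
by rewrite scale1r addr0 mul1r => /dbl0.
Qed.

Lemma lin_on_sum U phi (I : Type) (r : seq I) (c : I -> R) (x : I -> V) :
  lin_on U phi -> (forall i, x i \in U) ->
  phi (\sum_(i <- r) c i *: x i) = \sum_(i <- r) c i * phi (x i).
Proof.
move=> H Hx; elim: r => [|i r IH]; first by rewrite !big_nil (lin_on0 H).
rewrite !big_cons H ?IH // rpred_sum // => j _; exact: rpredZ.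
Qed.
Arguments lin_on_sum {U phi I r c x}.

Lemma BDl u v w : B (u + v) w = B u w + B v w.
Proof. by have := HB.1 1 u v w; rewrite scale1r mul1r. Qed.
Lemma B0l w : B 0 w = 0.
Proof. by have := BDl 0 0 w; rewrite addr0 => /dbl0. Qed.
Lemma BZl a u w : B (a *: u) w = a * B u w.
Proof. by have := HB.1 a u 0 w; rewrite addr0 B0l addr0. Qed.
Lemma Bsym u v : B u v = B v u.
Proof. exact: HB.2. Qed.
Lemma BNl u w : B (- u) w = - B u w.
Proof. by rewrite -scaleN1r BZl mulN1r. Qed.
Lemma BBl u v w : B (u - v) w = B u w - B v w.
Proof. by rewrite BDl BNl. Qed.
Lemma BDr u v w : B w (u + v) = B w u + B w v.
Proof. by rewrite Bsym BDl !(Bsym w). Qed.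
Lemma B0r w : B w 0 = 0.
Proof. by rewrite Bsym B0l. Qed.
Lemma BZr a u w : B w (a *: u) = a * B w u.
Proof. by rewrite Bsym BZl Bsym. Qed.
Lemma BNr u w : B w (- u) = - B w u.
Proof. by rewrite Bsym BNl Bsym. Qed.
Lemma BBr u v w : B w (u - v) = B w u - B w v.
Proof. by rewrite BDr BNr. Qed.
Lemma Bsuml (I : Type) (r : seq I) (F : I -> V) w :
  B (\sum_(i <- r) F i) w = \sum_(i <- r) B (F i) w.
Proof. by elim: r => [|i r IH]; rewrite ?big_nil ?B0l // !big_cons BDl IH. Qed.
Lemma Bsumr (I : Type) (r : seq I) (F : I -> V) w :
  B w (\sum_(i <- r) F i) = \sum_(i <- r) B w (F i).
Proof. by rewrite Bsym Bsuml; apply: eq_bigr => i _; rewrite Bsym. Qed.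

Lemma lin_Bl U w : lin_on U (B ^~ w).
Proof. by move=> a x y _ _; rewrite BDl BZl. Qed.
Lemma lin_Br U w : lin_on U (B w).
Proof. by move=> a x y _ _; rewrite BDr BZr. Qed.

Definition nondeg (U : {vspace V}) :=
  forall x, x \in U -> (forall w, w \in U -> B x w = 0) -> x = 0.

Lemma uniq_rep U a a' : nondeg U -> a \in U -> a' \in U ->
  (forall w, w \in U -> B a w = B a' w) -> a = a'.
Proof.
move=> nd aU a'U H; apply/eqP; rewrite -subr_eq0; apply/eqP; apply: nd.
  exact: rpredB.
by move=> w wU; rewrite BBl H // subrr.
Qed.

Lemma riesz U phi : nondeg U -> lin_on U phi ->
  exists2 l, l \in U & forall w, w \in U -> B l w = phi w.
Proof.
move=> nd lphi.
pose n := \dim U; pose X := vbasis U.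
have XU : forall i, X`_i \in U.
  move=> i; case: (ltnP i (size X)) => hi.
    by apply: vbasis_mem; rewrite mem_nth.
  by rewrite nth_default // mem0v.
pose G := \matrix_(i < n, j < n) B X`_i X`_j.
have key : forall c : 'rV_n, forall j : 'I_n,
    B (\sum_(i < n) c 0 i *: X`_i) X`_j = (c *m G) 0 j.
  move=> c j; rewrite Bsuml mxE; apply: eq_bigr => i _.
  by rewrite BZl mxE.
have Gu : G \in unitmx.
  rewrite -row_free_unit -kermx_eq0; apply/rowV0P => c /sub_kermxP cG0.
  have x0 : \sum_(i < n) c 0 i *: X`_i = 0.
    apply: nd; first by apply: rpred_sum => i _; apply: rpredZ.
    move=> w wU; rewrite (coord_vbasis wU) Bsumr big1 // => j _.
    by rewrite BZr key cG0 mxE mulr0.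
  apply/rowP => i; rewrite mxE.
  by have /freeP := basis_free (vbasisP U); move/(_ (fun i => c 0 i) x0 i).
pose phiv := \row_(j < n) phi X`_j.
pose c := phiv *m invmx G.
exists (\sum_(i < n) c 0 i *: X`_i).
  by apply: rpred_sum => i _; apply: rpredZ.
move=> w wU; rewrite (coord_vbasis wU) Bsumr (lin_on_sum lphi) //.
apply: eq_bigr => j _; rewrite BZr key /c mulmxKV // mxE //.
Qed.


Definition dpair (U : {vspace V}) (s : seq (V * V)) :=
  [/\ (forall p, p \in s -> p.1 \in U /\ p.2 \in U),
      (forall y, y \in U -> y = \sum_(p <- s) B y p.2 *: p.1) &
      (forall y, y \in U -> y = \sum_(p <- s) B y p.1 *: p.2)].

Definition bil_on (U : {vspace V}) (Q : V -> V -> R) :=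
  (forall x, x \in U -> lin_on U (Q x)) /\ (forall y, y \in U -> lin_on U (Q ^~ y)).

Lemma lin_on_sum_seq U phi (r : seq (V * V)) (c : V * V -> R) (x : V * V -> V) :
  lin_on U phi -> (forall p, p \in r -> x p \in U) ->
  phi (\sum_(p <- r) c p *: x p) = \sum_(p <- r) c p * phi (x p).
Proof.
move=> H Hx; elim: r Hx => [|i r IH] Hx; first by rewrite !big_nil (lin_on0 H).
rewrite !big_cons H ?IH //.
- by move=> p pr; apply: Hx; rewrite inE pr orbT.
- by apply: Hx; rewrite inE eqxx.
rewrite big_seq; apply: rpred_sum => p pr; apply: rpredZ; apply: Hx.
by rewrite inE pr orbT.
Qed.
Arguments lin_on_sum_seq {U phi r c x}.

Lemma dpair_inv U s s' Q : dpair U s -> dpair U s' -> bil_on U Q ->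
  \sum_(p <- s) Q p.1 p.2 = \sum_(p <- s') Q p.1 p.2.
Proof.
move=> [sU s1 s2] [s'U s'1 s'2] [Ql Qr].
transitivity (\sum_(p <- s) Q p.1 (\sum_(q <- s') B p.2 q.1 *: q.2)).
  apply: eq_big_seq => p ps; rewrite -s'2 //; exact: (sU p ps).2.
transitivity (\sum_(p <- s) \sum_(q <- s') B p.2 q.1 * Q p.1 q.2).
  apply: eq_big_seq => p ps; rewrite (lin_on_sum_seq (Ql _ (sU p ps).1)) //.
  by move=> q qs; exact: (s'U q qs).2.
rewrite exchange_big /=; apply: eq_big_seq => q qs.
rewrite [in RHS](s1 q.1); last exact: (s'U q qs).1.
rewrite (lin_on_sum_seq (Qr _ (s'U q qs).2)); last by move=> p ps; exact: (sU p ps).1.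
by apply: eq_bigr => p _; rewrite Bsym.
Qed.

Lemma dpair_trace_ex U : nondeg U -> exists s, dpair U s /\
  forall f, (forall w, w \in U -> f w \in U) ->
    trace_on U f = \sum_(p <- s) B (f p.1) p.2.
Proof.
move=> nd; pose n := \dim U; pose X := vbasis U.
have XU : forall i, X`_i \in U.
  move=> i; case: (ltnP i (size X)) => hi.
    by apply: vbasis_mem; rewrite mem_nth.
  by rewrite nth_default // mem0v.
have : forall i : 'I_n, exists d, d \in U /\ forall w, w \in U -> B d w = coord X i w.
  move=> i; have [d dU Hd] := riesz nd (fun a x y _ _ => linearP (coord X i) a x y).
  by exists d.
case/fin_all_exists => d Hd.
exists [seq (X`_i, d i) | i : 'I_n <- index_enum 'I_n]; split; first split.
- move=> p /mapP [i _ ->] /=; split => //; exact: (Hd i).1.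
- move=> y yU; rewrite big_map [LHS](coord_vbasis yU).
  by apply: eq_bigr => i _ /=; rewrite Bsym (Hd i).2.
- move=> y yU; rewrite big_map; apply: (uniq_rep nd yU).
  + by apply: rpred_sum => i _; apply: rpredZ; exact: (Hd i).1.
  move=> w wU; rewrite Bsuml {1}(coord_vbasis wU) Bsumr.
  by apply: eq_bigr => i _ /=; rewrite BZr BZl (Hd i).2 // mulrC.
- move=> f fU; rewrite big_map /trace_on; apply: eq_bigr => i _ /=.
  rewrite (tnth_nth 0) -(Hd i).2; first by rewrite Bsym.
  by apply: fU.
Qed.

Lemma trace_dp U s f : nondeg U -> dpair U s ->
  (forall w, w \in U -> f w \in U) ->
  (forall a x y, x \in U -> y \in U -> f (a *: x + y) = a *: f x + f y) ->
  trace_on U f = \sum_(p <- s) B (f p.1) p.2.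
Proof.
move=> nd ds fU flin; have [s0 [ds0 ->]] := dpair_trace_ex nd; last exact: fU.
apply: (dpair_inv (Q := fun x y => B (f x) y) ds0 ds); split.
- by move=> x xU a y z yU zU; rewrite BDr BZr.
- by move=> x xU a y z yU zU; rewrite flin // BDl BZl.
Qed.

Lemma dpair_cat (U U1 U2 : {vspace V}) (s1 s2 : seq (V * V)) :
  (forall x y, x \in U1 -> y \in U2 -> B x y = 0) ->
  (U1 <= U)%VS -> (U2 <= U)%VS ->
  (forall y, y \in U -> exists2 y1, y1 \in U1 & y - y1 \in U2) ->
  dpair U1 s1 -> dpair U2 s2 -> dpair U (s1 ++ s2).
Proof.
move=> orth sU1 sU2 dec [d1U d11 d12] [d2U d21 d22]; split.
- move=> p; rewrite mem_cat => /orP [] ps.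
    by have [? ?] := d1U p ps; split; apply: (subvP sU1).
  by have [? ?] := d2U p ps; split; apply: (subvP sU2).
- move=> y yU; have [y1 y1U y2U] := dec y yU; set y2 := y - y1 in y2U.
  have ey : y = y1 + y2 by rewrite /y2 addrC subrK.
  clearbody y2; rewrite ey.
  rewrite big_cat /=; congr (_ + _).
  + rewrite [LHS]d11 //; apply: eq_big_seq => p ps.
    by rewrite BDl (Bsym y2) (orth _ _ (d1U p ps).2 y2U) addr0.
  + rewrite [LHS]d21 //; apply: eq_big_seq => p ps.
    by rewrite BDl (orth _ _ y1U (d2U p ps).2) add0r.
- move=> y yU; have [y1 y1U y2U] := dec y yU; set y2 := y - y1 in y2U.
  have ey : y = y1 + y2 by rewrite /y2 addrC subrK.
  clearbody y2; rewrite ey.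
  rewrite big_cat /=; congr (_ + _).
  + rewrite [LHS]d12 //; apply: eq_big_seq => p ps.
    by rewrite BDl (Bsym y2) (orth _ _ (d1U p ps).1 y2U) addr0.
  + rewrite [LHS]d22 //; apply: eq_big_seq => p ps.
    by rewrite BDl (orth _ _ y1U (d2U p ps).1) add0r.
Qed.


Definition linV_on (U : {vspace V}) (f : V -> V) :=
  forall a x y, x \in U -> y \in U -> f (a *: x + y) = a *: f x + f y.

Lemma linV_on0 U f : linV_on U f -> f 0 = 0.
Proof.
move=> H; have := H 1 0 0 (mem0v U) (mem0v U).
rewrite scale1r addr0 scale1r => E; apply: (@addrI _ (f 0)); by rewrite addr0 -E.
Qed.

Lemma linV_on_sum U f (I : Type) (r : seq I) (c : I -> R) (x : I -> V) :
  linV_on U f -> (forall i, x i \in U) ->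
  f (\sum_(i <- r) c i *: x i) = \sum_(i <- r) c i *: f (x i).
Proof.
move=> H Hx; elim: r => [|i r IH]; first by rewrite !big_nil (linV_on0 H).
rewrite !big_cons H ?IH // rpred_sum // => j _; exact: rpredZ.
Qed.
Arguments linV_on_sum {U f I r c x}.

Lemma trace_nilp (U : {vspace V}) (f : V -> V) k : (forall w, w \in U -> f w \in U) -> linV_on U f ->
  (forall w, w \in U -> iter k f w = 0) -> trace_on U f = 0.
Proof.
move=> fU flin fk; pose n := \dim U; pose X := vbasis U.
have XU : forall i, X`_i \in U.
  move=> i; case: (ltnP i (size X)) => hi.
    by apply: vbasis_mem; rewrite mem_nth.
  by rewrite nth_default // mem0v.
have iU j w : w \in U -> iter j f w \in U.
  by move=> wU; elim: j => [|j IH] //=; apply: fU.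
pose M := \matrix_(i < n, j < n) coord X j (f X`_i).
have MX j : forall i l, (M ^+ j) i l = coord X l (iter j f X`_i).
  elim: j => [|j IH] i l.
    rewrite expr0 mxE /= coord_free //; exact: basis_free (vbasisP U).
  rewrite exprSr -mulmxE mxE /= [in RHS](coord_vbasis (iU j _ (XU i))).
  rewrite (linV_on_sum flin (fun i : 'I_n => XU i)) linear_sum; apply: eq_bigr => m _.
  by rewrite IH mxE linearZ.
have Mk : M ^+ k = 0.
  by apply/matrixP => i l; rewrite MX fk // linear0 mxE.
have -> : trace_on U f = \tr M.
  by rewrite /trace_on /mxtrace; apply: eq_bigr => i _; rewrite mxE (tnth_nth 0).
exact: mx_nilp_tr Mk.
Qed.


Lemma two_neq0 : (2 : R) != 0.
Proof. by rewrite pnatr_eq0. Qed.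

Lemma dpair_swap U s : dpair U s -> dpair U [seq (p.2, p.1) | p <- s].
Proof.
move=> [sU s1 s2]; split.
- by move=> p /mapP [q qs ->] /=; have [? ?] := sU q qs.
- by move=> y yU; rewrite big_map /=; apply: s2.
- by move=> y yU; rewrite big_map /=; apply: s1.
Qed.

Lemma dp_swap U s Q : dpair U s -> bil_on U Q ->
  \sum_(p <- s) Q p.1 p.2 = \sum_(p <- s) Q p.2 p.1.
Proof.
move=> ds bQ; rewrite (dpair_inv ds (dpair_swap ds) bQ) big_map //.
Qed.

Lemma linV_on_sum_seq U f (r : seq (V * V)) (c : V * V -> R) (x : V * V -> V) :
  linV_on U f -> (forall p, p \in r -> x p \in U) ->
  f (\sum_(p <- r) c p *: x p) = \sum_(p <- r) c p *: f (x p).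
Proof.
move=> H Hx; elim: r Hx => [|i r IH] Hx; first by rewrite !big_nil (linV_on0 H).
rewrite !big_cons H ?IH //.
- by move=> p pr; apply: Hx; rewrite inE pr orbT.
- by apply: Hx; rewrite inE eqxx.
rewrite big_seq; apply: rpred_sum => p pr; apply: rpredZ; apply: Hx.
by rewrite inE pr orbT.
Qed.
Arguments linV_on_sum_seq {U f r c x}.

Lemma dp_cyc U s f h : dpair U s ->
  (forall w, w \in U -> f w \in U) -> linV_on U f ->
  (forall w, w \in U -> h w \in U) -> linV_on U h ->
  \sum_(p <- s) B (f (h p.1)) p.2 = \sum_(p <- s) B (h (f p.1)) p.2.
Proof.
move=> [sU s1 s2] fU fl hU hl.
have s1U : forall p, p \in s -> p.1 \in U by move=> p /sU [].
transitivity (\sum_(p <- s) \sum_(q <- s) B (h p.1) q.2 * B (f q.1) p.2).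
  apply: eq_big_seq => p ps; rewrite {1}(s1 (h p.1)); last exact/hU/s1U.
  rewrite (linV_on_sum_seq fl s1U) Bsuml; apply: eq_bigr => q _.
  by rewrite BZl.
rewrite exchange_big /=; apply: eq_big_seq => q qs.
rewrite [in RHS](s1 (f q.1)); last exact/fU/s1U.
rewrite (linV_on_sum_seq hl s1U) Bsuml; apply: eq_bigr => p _.
by rewrite BZl mulrC.
Qed.

Section LCsec.
Variables (U : {vspace V}) (b : V -> V -> V).
Hypothesis nd : nondeg U.
Hypothesis bl : forall a x y z, b (a *: x + y) z = a *: b x z + b y z.

Lemma LC_spec u v : LC U b B u v \in U /\
  forall w, w \in U -> 2 * B (LC U b B u v) w = B (b u v) w + B (b w u) v + B (b w v) u.
Proof.
rewrite /LC; match goal with |- context[epsilon ?i ?P] => apply: (epsilon_spec i P) end.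
pose phi w := 2^-1 * (B (b u v) w + B (b w u) v + B (b w v) u).
have lphi : lin_on U phi.
  move=> a x y _ _; rewrite /phi !bl !BDr !BZr !BDl !BZl; ring.
have [l lU Hl] := riesz nd lphi.
exists l; split => // w wU; rewrite Hl // /phi mulrA divff ?mul1r //; exact: two_neq0.
Qed.

Lemma LC_mem u v : LC U b B u v \in U.
Proof. exact: (LC_spec u v).1. Qed.

Lemma LC_uniq u v l : l \in U ->
  (forall w, w \in U -> 2 * B l w = B (b u v) w + B (b w u) v + B (b w v) u) ->
  LC U b B u v = l.
Proof.
move=> lU Hl; have [LU HL] := LC_spec u v.
apply: (uniq_rep nd LU lU) => w wU.
by apply: (mulfI two_neq0); rewrite HL // Hl.
Qed.

Hypothesis brl : forall a x y z, b z (a *: x + y) = a *: b z x + b z y.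

Lemma LC_linl a u1 u2 v : LC U b B (a *: u1 + u2) v = a *: LC U b B u1 v + LC U b B u2 v.
Proof.
apply: LC_uniq; first by apply: rpredD; [apply: rpredZ|]; apply: LC_mem.
move=> w wU; rewrite BDl BZl mulrDr mulrCA (LC_spec _ _).2 // (LC_spec _ _).2 //.
rewrite ?bl ?brl !BDl !BDr !BZl !BZr; ring.
Qed.

Lemma LC_linr a u v1 v2 : LC U b B u (a *: v1 + v2) = a *: LC U b B u v1 + LC U b B u v2.
Proof.
apply: LC_uniq; first by apply: rpredD; [apply: rpredZ|]; apply: LC_mem.
move=> w wU; rewrite BDl BZl mulrDr mulrCA (LC_spec _ _).2 // (LC_spec _ _).2 //.
rewrite ?bl ?brl !BDl !BDr !BZl !BZr; ring.
Qed.

Lemma LC_0l v : LC U b B 0 v = 0.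
Proof.
have := LC_linl 1 0 0 v; rewrite scale1r addr0 scale1r => E.
by apply: (@addrI _ (LC U b B 0 v)); rewrite addr0 -E.
Qed.
Lemma LC_0r u : LC U b B u 0 = 0.
Proof.
have := LC_linr 1 u 0 0; rewrite scale1r addr0 scale1r => E.
by apply: (@addrI _ (LC U b B u 0)); rewrite addr0 -E.
Qed.
Lemma LC_Dl u1 u2 v : LC U b B (u1 + u2) v = LC U b B u1 v + LC U b B u2 v.
Proof. by have := LC_linl 1 u1 u2 v; rewrite !scale1r. Qed.
Lemma LC_Dr u v1 v2 : LC U b B u (v1 + v2) = LC U b B u v1 + LC U b B u v2.
Proof. by have := LC_linr 1 u v1 v2; rewrite !scale1r. Qed.
Lemma LC_Zl a u v : LC U b B (a *: u) v = a *: LC U b B u v.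
Proof. by have := LC_linl a u 0 v; rewrite addr0 LC_0l addr0. Qed.
Lemma LC_Zr a u v : LC U b B u (a *: v) = a *: LC U b B u v.
Proof. by have := LC_linr a u v 0; rewrite addr0 LC_0r addr0. Qed.
Lemma LC_Nl u v : LC U b B (- u) v = - LC U b B u v.
Proof. by rewrite -scaleN1r LC_Zl scaleN1r. Qed.
Lemma LC_Nr u v : LC U b B u (- v) = - LC U b B u v.
Proof. by rewrite -scaleN1r LC_Zr scaleN1r. Qed.
Lemma LC_Bl u1 u2 v : LC U b B (u1 - u2) v = LC U b B u1 v - LC U b B u2 v.
Proof. by rewrite LC_Dl LC_Nl. Qed.
Lemma LC_Br u v1 v2 : LC U b B u (v1 - v2) = LC U b B u v1 - LC U b B u v2.
Proof. by rewrite LC_Dr LC_Nr. Qed.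

End LCsec.

Section Adj.
Variables (U : {vspace V}).
Hypothesis nd : nondeg U.

Lemma adjB_spec f y : linV_on U f -> adjB U B f y \in U /\
  forall v, v \in U -> B (adjB U B f y) v = B (f v) y.
Proof.
move=> fl; rewrite /adjB; match goal with |- context[epsilon ?i ?P] => apply: (epsilon_spec i P) end.
have lphi : lin_on U (fun v => B (f v) y).
  by move=> a x z xU zU; rewrite fl // BDl BZl.
by have [l lU Hl] := riesz nd lphi; exists l.
Qed.

Lemma adjB_uniq f y l : linV_on U f -> l \in U ->
  (forall v, v \in U -> B l v = B (f v) y) -> adjB U B f y = l.
Proof.
move=> fl lU Hl; have [AU HA] := adjB_spec y fl.
by apply: (uniq_rep nd AU lU) => w wU; rewrite HA // Hl.
Qed.
End Adj.

End Gen.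

Section Main.
Variables (R : realType) (V : vectType R)
  (br : V -> V -> V) (B : V -> V -> R) (Z g : {vspace V}).
Hypotheses (Hbr : is_lie_bracket br) (Hnil : nilpotent br)
  (HB : is_sym_bilinear B) (Hlor : lorentzian B)
  (HZ : forall z, z \in Z <-> forall x, br z x = 0)
  (Hpos : forall z, z \in Z -> z != 0 -> 0 < B z z)
  (Hg : forall u, u \in g <-> forall z, z \in Z -> B u z = 0).

Lemma brDl u v w : br (u + v) w = br u w + br v w.
Proof. by have [H _ _ _] := Hbr; have := H 1 u v w; rewrite !scale1r. Qed.
Lemma brDr u v w : br w (u + v) = br w u + br w v.
Proof. by have [_ H _ _] := Hbr; have := H 1 u v w; rewrite !scale1r. Qed.
Lemma br0l w : br 0 w = 0.
Proof. by have := brDl 0 0 w; rewrite addr0 => E; apply: (@addrI _ (br 0 w)); rewrite addr0 -E. Qed.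
Lemma br0r w : br w 0 = 0.
Proof. by have := brDr 0 0 w; rewrite addr0 => E; apply: (@addrI _ (br w 0)); rewrite addr0 -E. Qed.
Lemma brZl a u w : br (a *: u) w = a *: br u w.
Proof. by have [H _ _ _] := Hbr; have := H a u 0 w; rewrite addr0 br0l addr0. Qed.
Lemma brZr a u w : br w (a *: u) = a *: br w u.
Proof. by have [_ H _ _] := Hbr; have := H a u 0 w; rewrite addr0 br0r addr0. Qed.
Lemma brlinl a x y z : br (a *: x + y) z = a *: br x z + br y z.
Proof. by have [H _ _ _] := Hbr; apply: H. Qed.
Lemma brlinr a x y z : br z (a *: x + y) = a *: br z x + br z y.
Proof. by have [_ H _ _] := Hbr; apply: H. Qed.
Lemma brNl u w : br (- u) w = - br u w.
Proof. by rewrite -scaleN1r brZl scaleN1r. Qed.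
Lemma brNr u w : br w (- u) = - br w u.
Proof. by rewrite -scaleN1r brZr scaleN1r. Qed.
Lemma br_anti u v : br u v = - br v u.
Proof.
have [_ _ H _] := Hbr; have := H (u + v).
rewrite brDl !brDr !H add0r addr0 => /eqP; rewrite addr_eq0 => /eqP //.
Qed.
Lemma brZ0l z x : z \in Z -> br z x = 0.
Proof. by move=> /HZ. Qed.
Lemma brZ0r z x : z \in Z -> br x z = 0.
Proof. by move=> zZ; rewrite br_anti brZ0l ?oppr0. Qed.

Let BDl := BDl HB. Let BDr := BDr HB. Let BZl := BZl HB. Let BZr := BZr HB.
Let BNl := BNl HB. Let BNr := BNr HB. Let BBl := BBl HB. Let BBr := BBr HB.
Let Bsuml := Bsuml HB. Let Bsumr := Bsumr HB. Let B0l := B0l HB. Let B0r := B0r HB. Let Bsym := Bsym HB.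

Lemma orth_gZ x z : x \in g -> z \in Z -> B x z = 0.
Proof. by move=> /Hg H /H. Qed.
Lemma orth_Zg z x : z \in Z -> x \in g -> B z x = 0.
Proof. by move=> zZ xg; rewrite Bsym orth_gZ. Qed.

Lemma nondeg_full : nondeg B fullv.
Proof.
move=> x _ Hx; have [e [eb He]] := Hlor.
pose X := in_tuple e.
have xe := coord_basis (X := X) eb (memvf x).
have c0 : forall j : 'I_(size e), coord X j x = 0.
  move=> j; have := Hx e`_j (memvf _).
  rewrite {1}xe Bsuml (bigD1 j) //= big1 => [|i ij]; last first.
    rewrite BZl He // (_ : (nat_of_ord i == j) = false) ?mulr0 //; exact: negPf ij.
  rewrite BZl He // eqxx addr0; case: (nat_of_ord j == 0)%N.
    by rewrite mulrN1 => /eqP; rewrite oppr_eq0 => /eqP.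
  by rewrite mulr1.
by rewrite xe big1 // => j _; rewrite c0 scale0r.
Qed.

Lemma nondeg_Z : nondeg B Z.
Proof.
move=> x xZ Hx; apply/eqP/negPn/negP => nx.
by have := Hpos xZ nx; rewrite Hx // ltxx.
Qed.

Lemma capgZ : (g :&: Z = 0)%VS.
Proof.
apply/eqP; rewrite -subv0; apply/subvP => x /memv_capP [xg xZ].
rewrite memv0; apply/negPn/negP => nx.
by have := Hpos xZ nx; rewrite orth_gZ // ltxx.
Qed.

Lemma decomp y : exists2 p, p \in Z & y - p \in g.
Proof.
have [l lZ Hl] := riesz HB nondeg_Z (lin_Br HB (U := Z) y).
exists l => //; apply/Hg => z zZ; rewrite BBl Hl // Bsym subrr //.
Qed.

Lemma addgZ : (g + Z)%VS = fullv.
Proof.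
apply/eqP; rewrite eqEsubv subvf /=; apply/subvP => y _.
have [p pZ pg] := decomp y; rewrite -(subrK p y); exact: memv_add.
Qed.

Definition Pg := daddv_pi g Z.
Definition Pz := daddv_pi Z g.
Lemma Pg_mem y : Pg y \in g. Proof. exact: memv_pi. Qed.
Lemma Pz_mem y : Pz y \in Z. Proof. exact: memv_pi. Qed.
Lemma PgPz y : Pg y + Pz y = y.
Proof. by apply: daddv_pi_add; rewrite ?capgZ ?addgZ ?memvf. Qed.
Lemma Pg_id y : y \in g -> Pg y = y.
Proof. by apply: daddv_pi_id; rewrite capgZ. Qed.
Lemma Pz_id y : y \in Z -> Pz y = y.
Proof. by apply: daddv_pi_id; rewrite capvC capgZ. Qed.
Lemma Pg_Z y : y \in Z -> Pg y = 0.
Proof. by move=> yZ; have := PgPz y; rewrite Pz_id // => E; apply: (@addIr _ y); rewrite E add0r. Qed.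
Lemma Pz_g y : y \in g -> Pz y = 0.
Proof. by move=> yg; have := PgPz y; rewrite Pg_id // => E; apply: (@addrI _ y); rewrite E addr0. Qed.

Lemma nondeg_g : nondeg B g.
Proof.
move=> x xg Hx; apply: nondeg_full; first exact: memvf.
move=> w _.
by rewrite -(PgPz w) BDr Hx ?Pg_mem // orth_gZ ?Pz_mem // addr0.
Qed.


Notation Lh := (LC fullv br B).
Notation bg := (brg br g Z).
Notation om := (omega br g Z).
Notation Lg := (LC g bg B).
Notation S := (S_op br B g Z).
Notation J := (J_op br B g Z).

Lemma oZl a b : b \in g -> B (Pz a) b = 0.
Proof. by move=> bg'; rewrite orth_Zg ?Pz_mem. Qed.
Lemma oZr a b : b \in g -> B b (Pz a) = 0.
Proof. by move=> bg'; rewrite orth_gZ ?Pz_mem. Qed.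
Lemma oGl a z : z \in Z -> B (Pg a) z = 0.
Proof. by move=> zZ; rewrite orth_gZ ?Pg_mem. Qed.
Lemma oGr a z : z \in Z -> B z (Pg a) = 0.
Proof. by move=> zZ; rewrite orth_Zg ?Pg_mem. Qed.

Lemma bglinl a x y z : bg (a *: x + y) z = a *: bg x z + bg y z.
Proof. by rewrite /brg brlinl linearP. Qed.
Lemma bglinr a x y z : bg z (a *: x + y) = a *: bg z x + bg z y.
Proof. by rewrite /brg brlinr linearP. Qed.
Lemma omlinl a x y z : om (a *: x + y) z = a *: om x z + om y z.
Proof. by rewrite /omega brlinl linearP. Qed.
Lemma omlinr a x y z : om z (a *: x + y) = a *: om z x + om z y.
Proof. by rewrite /omega brlinr linearP. Qed.

Lemma Lh_spec u v w : 2 * B (Lh u v) w = B (br u v) w + B (br w u) v + B (br w v) u.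
Proof. by apply: (LC_spec HB nondeg_full brlinl u v).2; exact: memvf. Qed.
Lemma Lh_uniq u v l : (forall w, 2 * B l w = B (br u v) w + B (br w u) v + B (br w v) u) ->
  Lh u v = l.
Proof. move=> H; apply: (LC_uniq HB nondeg_full brlinl). exact: memvf. move=> w _; exact: H. Qed.
Lemma Lg_mem u v : Lg u v \in g.
Proof. exact: (LC_mem HB nondeg_g bglinl). Qed.
Lemma Lg_spec u v w : w \in g -> 2 * B (Lg u v) w = B (bg u v) w + B (bg w u) v + B (bg w v) u.
Proof. exact: (LC_spec HB nondeg_g bglinl u v).2. Qed.

Lemma Lh_Dl u1 u2 v : Lh (u1 + u2) v = Lh u1 v + Lh u2 v.
Proof. exact: (LC_Dl HB nondeg_full brlinl brlinr). Qed.
Lemma Lh_Dr u v1 v2 : Lh u (v1 + v2) = Lh u v1 + Lh u v2.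
Proof. exact: (LC_Dr HB nondeg_full brlinl brlinr). Qed.
Lemma Lh_Zl a u v : Lh (a *: u) v = a *: Lh u v.
Proof. exact: (LC_Zl HB nondeg_full brlinl brlinr). Qed.
Lemma Lh_Zr a u v : Lh u (a *: v) = a *: Lh u v.
Proof. exact: (LC_Zr HB nondeg_full brlinl brlinr). Qed.
Lemma Lh_Nl u v : Lh (- u) v = - Lh u v.
Proof. exact: (LC_Nl HB nondeg_full brlinl brlinr). Qed.
Lemma Lh_Nr u v : Lh u (- v) = - Lh u v.
Proof. exact: (LC_Nr HB nondeg_full brlinl brlinr). Qed.
Lemma Lh_0l v : Lh 0 v = 0.
Proof. exact: (LC_0l HB nondeg_full brlinl brlinr). Qed.
Lemma Lh_0r u : Lh u 0 = 0.
Proof. exact: (LC_0r HB nondeg_full brlinl brlinr). Qed.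
Lemma Lg_Dl u1 u2 v : Lg (u1 + u2) v = Lg u1 v + Lg u2 v.
Proof. exact: (LC_Dl HB nondeg_g bglinl bglinr). Qed.
Lemma Lg_Dr u v1 v2 : Lg u (v1 + v2) = Lg u v1 + Lg u v2.
Proof. exact: (LC_Dr HB nondeg_g bglinl bglinr). Qed.
Lemma Lg_Zl a u v : Lg (a *: u) v = a *: Lg u v.
Proof. exact: (LC_Zl HB nondeg_g bglinl bglinr). Qed.
Lemma Lg_Zr a u v : Lg u (a *: v) = a *: Lg u v.
Proof. exact: (LC_Zr HB nondeg_g bglinl bglinr). Qed.
Lemma Lg_Nl u v : Lg (- u) v = - Lg u v.
Proof. exact: (LC_Nl HB nondeg_g bglinl bglinr). Qed.
Lemma Lg_Nr u v : Lg u (- v) = - Lg u v.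
Proof. exact: (LC_Nr HB nondeg_g bglinl bglinr). Qed.

Lemma om_lin u : linV_on g (om u).
Proof. by move=> a x y _ _; apply: omlinr. Qed.
Lemma bg_lin u : linV_on g (bg u).
Proof. by move=> a x y _ _; apply: bglinr. Qed.

Lemma S_mem x u : S x u \in g.
Proof. exact: (adjB_spec HB nondeg_g x (om_lin u)).1. Qed.
Lemma S_spec x u w : w \in g -> B (S x u) w = B (om u w) x.
Proof. exact: (adjB_spec HB nondeg_g x (om_lin u)).2. Qed.
Lemma J_mem u v : J u v \in g.
Proof. exact: (adjB_spec HB nondeg_g u (bg_lin v)).1. Qed.
Lemma J_spec u v w : w \in g -> B (J u v) w = B (bg v w) u.
Proof. exact: (adjB_spec HB nondeg_g u (bg_lin v)).2. Qed.

Lemma S_linu x a u1 u2 : S x (a *: u1 + u2) = a *: S x u1 + S x u2.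
Proof.
apply: (adjB_uniq HB nondeg_g (om_lin _)).
  by apply: rpredD; [apply: rpredZ|]; apply: S_mem.
by move=> w wg; rewrite BDl BZl !S_spec // omlinl BDl BZl.
Qed.
Lemma S_linx x1 x2 a u : S (a *: x1 + x2) u = a *: S x1 u + S x2 u.
Proof.
apply: (adjB_uniq HB nondeg_g (om_lin _)).
  by apply: rpredD; [apply: rpredZ|]; apply: S_mem.
by move=> w wg; rewrite BDl BZl !S_spec // BDr BZr.
Qed.
Lemma J_lin u a v1 v2 : J u (a *: v1 + v2) = a *: J u v1 + J u v2.
Proof.
apply: (adjB_uniq HB nondeg_g (bg_lin _)).
  by apply: rpredD; [apply: rpredZ|]; apply: J_mem.
by move=> w wg; rewrite BDl BZl !J_spec // bglinl BDl BZl.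
Qed.
Lemma S_skew x u w : u \in g -> w \in g -> B (S x u) w = - B u (S x w).
Proof.
move=> ug wg; rewrite !S_spec // (Bsym u) S_spec // /omega br_anti linearN BNl //.
Qed.


Lemma Lh_gg u v : u \in g -> v \in g -> Lh u v = Lg u v + 2^-1 *: om u v.
Proof.
move=> ug vg; apply: Lh_uniq => w.
rewrite -(PgPz w); have ag := Pg_mem w; have zZ := Pz_mem w.
move: (Pg w) (Pz w) ag zZ => a z ag zZ.
rewrite !brDl (brZ0l u zZ) (brZ0l v zZ) !addr0.
rewrite -[br u v]PgPz -[br a u]PgPz -[br a v]PgPz /omega.
rewrite !BDl !BDr !BZl (orth_gZ (Lg_mem u v) zZ) (oZl _ ag) (oGl _ zZ) (oZl _ vg) (oZl _ ug).
rewrite mulr0 !addr0 !add0r mulrDr (Lg_spec u v ag) mulrA divff ?two_neq0 // mul1r /brg; ring.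
Qed.

Lemma Lh_gZ u x : u \in g -> x \in Z -> Lh u x = - (2^-1 *: S x u).
Proof.
move=> ug xZ; apply: Lh_uniq => w.
rewrite -(PgPz w); have ag := Pg_mem w; have zZ := Pz_mem w.
move: (Pg w) (Pz w) ag zZ => a z ag zZ.
rewrite !(brZ0r _ xZ) B0l brDl (brZ0l u zZ) addr0.
rewrite B0l addr0 add0r -[br a u]PgPz BDl (oGl _ xZ) add0r.
rewrite BNl BZl BDr (orth_gZ (S_mem x u) zZ) addr0 (S_spec x u ag) /omega (br_anti u a).
rewrite linearN BNl !mulrN opprK mulrA divff ?two_neq0 // mul1r //.
Qed.

Lemma Lh_Zg x u : x \in Z -> u \in g -> Lh x u = - (2^-1 *: S x u).
Proof.
move=> xZ ug; apply: Lh_uniq => w.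
rewrite -(PgPz w); have ag := Pg_mem w; have zZ := Pz_mem w.
move: (Pg w) (Pz w) ag zZ => a z ag zZ.
rewrite (brZ0l _ xZ) (brZ0r _ xZ) !B0l !add0r brDl (brZ0l u zZ) addr0.
rewrite -[br a u]PgPz BDl (oGl _ xZ) add0r.
rewrite BNl BZl BDr (orth_gZ (S_mem x u) zZ) addr0 (S_spec x u ag) /omega (br_anti u a).
rewrite linearN BNl !mulrN opprK mulrA divff ?two_neq0 // mul1r //.
Qed.

Lemma Lh_ZZ x y : x \in Z -> y \in Z -> Lh x y = 0.
Proof.
move=> xZ yZ; apply: Lh_uniq => w.
by rewrite (brZ0l _ xZ) !(brZ0r _ xZ) !(brZ0r _ yZ) !B0l mulr0 !addr0.
Qed.


Lemma vec_eq x y : (forall t, B x t = B y t) -> x = y.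
Proof.
move=> H; apply: (uniq_rep HB nondeg_full); rewrite ?memvf // => w _; exact: H.
Qed.

Lemma Lh_linl a x y v : Lh (a *: x + y) v = a *: Lh x v + Lh y v.
Proof. exact: (LC_linl HB nondeg_full brlinl brlinr). Qed.
Lemma Lh_linr a u x y : Lh u (a *: x + y) = a *: Lh u x + Lh u y.
Proof. exact: (LC_linr HB nondeg_full brlinl brlinr). Qed.
Lemma Lg_linl a x y v : Lg (a *: x + y) v = a *: Lg x v + Lg y v.
Proof. exact: (LC_linl HB nondeg_g bglinl bglinr). Qed.
Lemma Lg_linr a u x y : Lg u (a *: x + y) = a *: Lg u x + Lg u y.
Proof. exact: (LC_linr HB nondeg_g bglinl bglinr). Qed.

Notation Kh u w v := (curv fullv br B u w v).
Notation Kg u w v := (curv g bg B u w v).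

Lemma Kh_lin u v : linV_on fullv (fun w => Kh u w v).
Proof.
move=> a x y _ _; rewrite /curv brlinr !Lh_linl Lh_linr.
apply: vec_eq => t; rewrite !(BDl, BBl, BNl, BZl); ring.
Qed.

Lemma Kg_lin u v : linV_on g (fun w => Kg u w v).
Proof.
move=> a x y _ _; rewrite /curv bglinr !Lg_linl Lg_linr.
apply: vec_eq => t; rewrite !(BDl, BBl, BNl, BZl); ring.
Qed.

Lemma Kg_mem u w v : Kg u w v \in g.
Proof. by rewrite /curv; apply: rpredB; [|apply: rpredB]; apply: Lg_mem. Qed.

Lemma split_trace sg sz f : dpair B g sg -> dpair B Z sz -> linV_on fullv f ->
  trace_on fullv f = \sum_(p <- sg) B (f p.1) p.2 + \sum_(p <- sz) B (f p.1) p.2.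
Proof.
move=> dg dz fl; rewrite -big_cat; apply: (trace_dp HB nondeg_full).
- apply: (dpair_cat HB _ (subvf g) (subvf Z)) => //.
  + by move=> x y xg yZ; apply: orth_gZ.
  + move=> y _; exists (Pg y); first exact: Pg_mem.
    by rewrite -{1}(PgPz y) [Pg y + _]addrC addrK Pz_mem.
- by move=> *; exact: memvf.
- exact: fl.
Qed.


Lemma inv4 : (4 : R)^-1 = 2^-1 * 2^-1.
Proof. by rewrite -invfM -natrM. Qed.

Lemma Kh_ZgZ x y w : x \in Z -> y \in Z -> w \in g -> Kh x w y = - (4^-1 *: S x (S y w)).
Proof.
move=> xZ yZ wg; rewrite /curv (brZ0l w xZ) Lh_0l (Lh_ZZ xZ yZ) Lh_0r (Lh_gZ wg yZ).
rewrite Lh_Nr Lh_Zr (Lh_Zg xZ (S_mem y w)) inv4.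
apply: vec_eq => t; rewrite !(BDl, BBl, BNl, BZl, B0l); ring.
Qed.

Lemma Kh_xZy x y w : x \in Z -> y \in Z -> w \in Z -> Kh x w y = 0.
Proof.
move=> xZ yZ wZ; rewrite /curv (brZ0l w xZ) Lh_0l (Lh_ZZ xZ yZ) (Lh_ZZ wZ yZ) !Lh_0r.
by rewrite !subrr.
Qed.

Lemma formula2 x y : x \in Z -> y \in Z ->
  ricci fullv br B x y = - 4^-1 * trace_on g (fun w => S x (S y w)).
Proof.
move=> xZ yZ.
have [sg [dg _]] := dpair_trace_ex HB nondeg_g.
have [sz [dz _]] := dpair_trace_ex HB nondeg_Z.
rewrite /ricci (split_trace dg dz (Kh_lin x y)).
rewrite (trace_dp HB nondeg_g dg); first last.
- by move=> a u v _ _; rewrite !S_linu.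
- by move=> *; apply: S_mem.
case: dz => dzU _ _; case: (dg) => dgU _ _.
rewrite [X in _ + X]big1_seq ?addr0; last first.
  by move=> p /dzU [p1Z _]; rewrite Kh_xZy // B0l.
rewrite mulr_sumr; apply: eq_big_seq => p /dgU [p1g _].
by rewrite Kh_ZgZ // BNl BZl mulNr.
Qed.



Lemma S_0 x : S x 0 = 0.
Proof.
have := S_linu x 1 0 0; rewrite scale1r addr0 scale1r => E.
by apply: (@addrI _ (S x 0)); rewrite addr0 -E.
Qed.
Lemma S_Nu x u : S x (- u) = - S x u.
Proof. by have := S_linu x (-1) u 0; rewrite addr0 S_0 addr0 !scaleN1r. Qed.

Lemma Kh_gZZ u x w z : u \in g -> x \in Z -> w \in Z -> z \in Z -> B (Kh u w x) z = 0.
Proof.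
move=> ug xZ wZ zZ; rewrite /curv (brZ0r u wZ) Lh_0l (Lh_ZZ wZ xZ) Lh_0r (Lh_gZ ug xZ).
rewrite Lh_Nr Lh_Zr (Lh_Zg wZ (S_mem x u)).
by rewrite !(BDl, BBl, BNl, BZl, B0l) (orth_gZ (S_mem _ _) zZ); ring.
Qed.

Lemma Kh_gZg u x w d : u \in g -> x \in Z -> w \in g -> d \in g ->
  B (Kh u w x) d = - (2^-1) * B (S x (bg u w)) d + 2^-1 * B (Lg u (S x w)) d
                   - 2^-1 * B (Lg w (S x u)) d.
Proof.
move=> ug xZ wg dg; rewrite /curv -[br u w]PgPz Lh_Dl (Lh_gZ (Pg_mem _) xZ).
rewrite (Lh_ZZ (Pz_mem _) xZ) addr0 (Lh_gZ wg xZ) (Lh_gZ ug xZ) !Lh_Nr !Lh_Zr.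
rewrite (Lh_gg ug (S_mem x w)) (Lh_gg wg (S_mem x u)) /omega.
rewrite !(BDl, BBl, BNl, BZl, B0l) !(oZl _ dg) /brg; ring.
Qed.

Lemma iter_br_nil : exists k, forall a w, iter k (br a) w = 0.
Proof.
have [k Hk] := Hnil; exists k => a w; rewrite -(Hk w (nseq k a)) ?size_nseq //.
by elim: k {Hk} => //= k ->.
Qed.

Lemma tr_bg_0 a : trace_on g (bg a) = 0.
Proof.
have [k Hk] := iter_br_nil.
apply: (trace_nilp (k := k)); first by move=> *; apply: Pg_mem.
  exact: bg_lin.
move=> w wg.
have -> : iter k (bg a) w = Pg (iter k (br a) w).
  elim: k {Hk} => /=; first by rewrite Pg_id.
  move=> k ->; rewrite /brg; congr (Pg _).
  by rewrite -{2}(PgPz (iter k (br a) w)) brDr (brZ0r _ (Pz_mem _)) addr0.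
by rewrite Hk linear0.
Qed.


Lemma bg_anti a b : bg a b = - bg b a.
Proof. by rewrite /brg br_anti linearN. Qed.

Lemma S_linV x : linV_on g (S x).
Proof. by move=> a u v _ _; apply: S_linu. Qed.

Lemma formula3 u x : u \in g -> x \in Z ->
  ricci fullv br B u x = - 4^-1 * trace_on g (fun w => J u (S x w)).
Proof.
move=> ug xZ.
have [sg [dg _]] := dpair_trace_ex HB nondeg_g.
have [sz [dz _]] := dpair_trace_ex HB nondeg_Z.
rewrite /ricci (split_trace dg dz (Kh_lin u x)).
rewrite (trace_dp HB nondeg_g dg); first last.
- by move=> a v w _ _; rewrite S_linu J_lin.
- by move=> *; apply: J_mem.
case: (dz) => dzU _ _; case: (dg) => dgU _ _.
rewrite [X in _ + X]big1_seq ?addr0; last first.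
  by move=> p /dzU [p1Z p2Z]; rewrite Kh_gZZ.
have sgg : forall p, p \in sg -> p.1 \in g /\ p.2 \in g by [].
set T1 := \sum_(p <- sg) B (S x (bg u p.1)) p.2.
set T2 := \sum_(p <- sg) B (Lg u (S x p.1)) p.2.
set T3 := \sum_(p <- sg) B (Lg p.1 (S x u)) p.2.
set TJ := \sum_(p <- sg) B (J u (S x p.1)) p.2.
have -> : \sum_(p <- sg) B (Kh u p.1 x) p.2 = - (2^-1) * T1 + 2^-1 * T2 - 2^-1 * T3.
  rewrite /T1 /T2 /T3 !mulr_sumr -big_split -sumrB; apply: eq_big_seq => p /dgU [p1g p2g].
  by rewrite Kh_gZg.
have Y1 : \sum_(p <- sg) B (bg u (S x p.1)) p.2 = T1.
  apply: (dp_cyc HB dg) => //; first by move=> *; apply: Pg_mem.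
  - exact: bg_lin.
  - by move=> *; apply: S_mem.
  - exact: S_linV.
have Y2 : \sum_(p <- sg) B (bg p.2 u) (S x p.1) = T1.
  transitivity (- \sum_(p <- sg) B (S x (bg p.2 u)) p.1).
    rewrite -sumrN; apply: eq_big_seq => p /dgU [p1g p2g].
    by rewrite S_skew ?Pg_mem // opprK.
  have bQ : bil_on g (fun c d => B (S x (bg d u)) c).
    split => c cg a d1 d2 _ _ /=; first by rewrite bglinl S_linu BDl BZl.
    by rewrite BDr BZr.
  have E : \sum_(p <- sg) B (S x (bg p.2 u)) p.1 = \sum_(p <- sg) B (S x (bg p.1 u)) p.2
    := dp_swap HB dg bQ.
  rewrite E -sumrN; apply: eq_bigr => p _ /=.
  by rewrite bg_anti S_Nu BNl opprK.
have Y3 : \sum_(p <- sg) B (bg p.2 (S x p.1)) u = - TJ.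
  rewrite -sumrN; apply: eq_big_seq => p /dgU [p1g p2g].
  by rewrite J_spec // bg_anti BNl.
have hT2 : T2 = T1 - 2^-1 * TJ.
  apply: (mulfI (two_neq0 R)); rewrite mulrBr mulrA divff ?two_neq0 // mul1r.
  rewrite /T2 mulr_sumr.
  transitivity (\sum_(p <- sg) (B (bg u (S x p.1)) p.2 + B (bg p.2 u) (S x p.1)
                                + B (bg p.2 (S x p.1)) u)).
    by apply: eq_big_seq => p /dgU [p1g p2g]; rewrite Lg_spec.
  rewrite !big_split /= Y1 Y2 Y3; ring.
have N0 : \sum_(p <- sg) B (bg (S x u) p.1) p.2 = 0.
  have fU : forall w, w \in g -> bg (S x u) w \in g by move=> w _; exact: memv_pi.
  have E := trace_dp HB nondeg_g dg fU (bg_lin _).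
  by rewrite -E; exact: tr_bg_0.
have Z1 : \sum_(p <- sg) B (bg p.1 (S x u)) p.2 = 0.
  transitivity (- \sum_(p <- sg) B (bg (S x u) p.1) p.2); last by rewrite N0 oppr0.
  rewrite -sumrN; apply: eq_bigr => p _.
  by rewrite bg_anti BNl.
have Z2 : \sum_(p <- sg) B (bg p.2 p.1) (S x u) = 0.
  have bQ : bil_on g (fun c d => B (bg d c) (S x u)).
    split => c cg a d1 d2 _ _ /=; first by rewrite bglinl BDl BZl.
    by rewrite bglinr BDl BZl.
  have E : \sum_(p <- sg) B (bg p.2 p.1) (S x u) = \sum_(p <- sg) B (bg p.1 p.2) (S x u)
    := dp_swap HB dg bQ.
  have H : \sum_(p <- sg) B (bg p.2 p.1) (S x u) = - \sum_(p <- sg) B (bg p.2 p.1) (S x u).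
    rewrite {1}E -sumrN; apply: eq_bigr => p _; by rewrite bg_anti BNl.
  move: H; set X := \sum_(p <- sg) _; move=> H; lra.
have Z3 : \sum_(p <- sg) B (bg p.2 (S x u)) p.1 = 0.
  have bQ : bil_on g (fun c d => B (bg d (S x u)) c).
    split => c cg a d1 d2 _ _ /=; first by rewrite bglinl BDl BZl.
    by rewrite BDr BZr.
  have E : \sum_(p <- sg) B (bg p.2 (S x u)) p.1 = \sum_(p <- sg) B (bg p.1 (S x u)) p.2
    := dp_swap HB dg bQ.
  by rewrite E Z1.
have hT3 : T3 = 0.
  apply: (mulfI (two_neq0 R)); rewrite mulr0 /T3 mulr_sumr.
  transitivity (\sum_(p <- sg) (B (bg p.1 (S x u)) p.2 + B (bg p.2 p.1) (S x u)
                                + B (bg p.2 (S x u)) p.1)).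
    by apply: eq_big_seq => p /dgU [p1g p2g]; rewrite Lg_spec.
  by rewrite !big_split /= Z1 Z2 Z3 !addr0.
rewrite hT2 hT3 inv4; ring.
Qed.


Lemma om_mem a b : om a b \in Z.
Proof. exact: Pz_mem. Qed.
Lemma om_anti a b : om a b = - om b a.
Proof. by rewrite /omega br_anti linearN. Qed.

Lemma Kh_ggg u v w d : u \in g -> v \in g -> w \in g -> d \in g ->
  B (Kh u w v) d = B (Kg u w v) d - 2^-1 * B (S (om u w) v) d
     + 4^-1 * B (S (om w v) u) d - 4^-1 * B (S (om u v) w) d.
Proof.
move=> ug vg wg dg; rewrite /curv -[br u w]PgPz Lh_Dl (Lh_gg (Pg_mem _) vg).
rewrite (Lh_Zg (Pz_mem _) vg) (Lh_gg wg vg) (Lh_gg ug vg) !Lh_Dr !Lh_Zr.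
rewrite (Lh_gg ug (Lg_mem w v)) (Lh_gg wg (Lg_mem u v)).
rewrite (Lh_gZ ug (om_mem w v)) (Lh_gZ wg (om_mem u v)) inv4 /omega.
rewrite !(BDl, BBl, BNl, BZl, B0l) !(oZl _ dg) /brg; ring.
Qed.

Lemma Kh_gZg' u v z d : u \in g -> v \in g -> z \in Z -> d \in Z ->
  B (Kh u z v) d = 4^-1 * B (om u (S z v)) d.
Proof.
move=> ug vg zZ dZ; rewrite /curv (brZ0r u zZ) Lh_0l (Lh_Zg zZ vg) Lh_Nr Lh_Zr.
rewrite (Lh_gg ug (S_mem z v)) (Lh_gg ug vg) Lh_Dr Lh_Zr (Lh_Zg zZ (Lg_mem u v)).
rewrite (Lh_ZZ zZ (om_mem u v)) inv4.
rewrite !(BDl, BBl, BNl, BZl, B0l) !(orth_gZ (Lg_mem _ _) dZ) !(orth_gZ (S_mem _ _) dZ); ring.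
Qed.

Lemma formula1 u v : u \in g -> v \in g ->
  ricci fullv br B u v = ricci g bg B u v
     - 2^-1 * trace_on g (fun w => omega_star br B g Z u (om v w)).
Proof.
move=> ug vg.
have [sg [dg _]] := dpair_trace_ex HB nondeg_g.
have [sz [dz _]] := dpair_trace_ex HB nondeg_Z.
rewrite /ricci (split_trace dg dz (Kh_lin u v)).
rewrite (trace_dp HB nondeg_g dg (f := fun w => Kg u w v)); first last.
- exact: Kg_lin.
- by move=> *; apply: Kg_mem.
rewrite (trace_dp HB nondeg_g dg (f := fun w => omega_star br B g Z u (om v w))); first last.
- by move=> a x y _ _; rewrite omlinr -/(S _ u) S_linx.
- by move=> *; apply: S_mem.
case: (dz) => dzU dz1 _; case: (dg) => dgU dg1 _.
set T := \sum_(p <- sg) B (omega_star br B g Z u (om v p.1)) p.2.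
have ET : T = \sum_(p <- sg) B (om u p.2) (om v p.1).
  by apply: eq_big_seq => p /dgU [p1g p2g]; rewrite -/(S _ u) S_spec.
set A := \sum_(p <- sg) B (S (om u p.1) v) p.2.
set C := \sum_(p <- sg) B (S (om p.1 v) u) p.2.
set D := \sum_(p <- sg) B (S (om u v) p.1) p.2.
set E := \sum_(p <- sz) B (om u (S p.1 v)) p.2.
have -> : \sum_(p <- sg) B (Kh u p.1 v) p.2 =
    \sum_(p <- sg) B (Kg u p.1 v) p.2 - 2^-1 * A + 4^-1 * C - 4^-1 * D.
  rewrite /A /C /D !mulr_sumr -!sumrB -big_split -sumrB.
  by apply: eq_big_seq => p /dgU [p1g p2g]; rewrite Kh_ggg.
have -> : \sum_(p <- sz) B (Kh u p.1 v) p.2 = 4^-1 * E.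
  rewrite /E mulr_sumr; apply: eq_big_seq => p /dzU [p1Z p2Z].
  by rewrite Kh_gZg'.
have hA : A = T.
  have bQ : bil_on g (fun c d => B (om v d) (om u c)).
    split => c cg a d1 d2 _ _ /=; first by rewrite omlinr BDl BZl.
    by rewrite omlinr BDr BZr.
  have E1 : \sum_(p <- sg) B (om v p.2) (om u p.1) = \sum_(p <- sg) B (om v p.1) (om u p.2)
    := dp_swap HB dg bQ.
  rewrite ET /A.
  transitivity (\sum_(p <- sg) B (om v p.2) (om u p.1)).
    by apply: eq_big_seq => p /dgU [p1g p2g]; rewrite S_spec.
  by rewrite E1; apply: eq_bigr => p _; rewrite Bsym.
have hC : C = - T.
  rewrite ET /C -sumrN; apply: eq_big_seq => p /dgU [p1g p2g].
  by rewrite S_spec // (om_anti p.1 v) BNr.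
have hD : D = 0.
  have bQ : bil_on g (fun c d => B (S (om u v) c) d).
    split => c cg a d1 d2 _ _ /=; first by rewrite BDr BZr.
    by rewrite S_linu BDl BZl.
  have E1 : \sum_(p <- sg) B (S (om u v) p.1) p.2 = \sum_(p <- sg) B (S (om u v) p.2) p.1
    := dp_swap HB dg bQ.
  have H : D = - D.
    rewrite {1}/D E1 /D -sumrN; apply: eq_big_seq => p /dgU [p1g p2g].
    by rewrite S_skew // Bsym.
  lra.
have hE : E = T.
  rewrite ET /E.
  transitivity (\sum_(p <- sz) \sum_(q <- sg) B (om u q.2) p.2 * B (om v q.1) p.1).
    apply: eq_big_seq => p /dzU [p1Z p2Z].
    rewrite -S_spec; last exact: S_mem.
    rewrite {1}(dg1 (S p.2 u)); last exact: S_mem.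
    rewrite Bsuml; apply: eq_big_seq => q /dgU [q1g q2g].
    by rewrite BZl S_spec // (Bsym q.1) S_spec.
  rewrite exchange_big /=; apply: eq_big_seq => q /dgU [q1g q2g].
  rewrite Bsym {2}(dz1 (om u q.2)); last exact: om_mem.
  rewrite Bsumr; apply: eq_bigr => p _.
  by rewrite BZr mulrC.
rewrite hA hC hD hE inv4; ring.
Qed.

End Main.

Unset Implicit Arguments.
Theorem proposition3p2 (R : realType) (V : vectType R)
  (br : V -> V -> V) (B : V -> V -> R) (Z g : {vspace V}) :
  is_lie_bracket br ->
  nilpotent br ->
  is_sym_bilinear B ->
  lorentzian B ->
  (* Z is the center of h *)
  (forall z, z \in Z <-> forall x, br z x = 0) ->
  (* the center is nondegenerate, with positive definite restricted form *)
  (forall z, z \in Z -> z != 0 -> 0 < B z z) ->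
  (* g = Z(h)^perp *)
  (forall u, u \in g <-> forall z, z \in Z -> B u z = 0) ->
  [/\ (forall u v, u \in g -> v \in g ->
         ricci fullv br B u v =
         ricci g (brg br g Z) B u v
         - 2^-1 * trace_on g (fun w => omega_star br B g Z u (omega br g Z v w))),
      (forall x y, x \in Z -> y \in Z ->
         ricci fullv br B x y =
         - 4^-1 * trace_on g (fun w => S_op br B g Z x (S_op br B g Z y w))) &
      (forall u x, u \in g -> x \in Z ->
         ricci fullv br B u x =
         - 4^-1 * trace_on g (fun w => J_op br B g Z u (S_op br B g Z x w)))].
Proof.
move=> Hbr Hnil HB Hlor HZ Hpos Hg; split.
- by move=> u v ug vg; apply: formula1.
- by move=> x y xZ yZ; apply: formula2.
- by move=> u x ug xZ; apply: formula3.
Qed.
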